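(* Let $s\in\mathbb{N}$, let $M$ be a quadratic form on $\mathbb{F}_{p}^{d}$, and let $x_{1},x_{2}\in\Gamma^{s}(M)$ and $y\in\Gamma^{s}_{1}(M)$. If $x_{1}\sim y$ and $x_{2}\sim y$, then $x_{1}\sim x_{2}$. In particular, $\sim$ is an equivalence relation on $\Gamma^{s}_{1}(M)$.
   Context: $\mathrm{HP}_{d}(s)$: homogeneous degree-$s$ polynomials in $\mathbb{F}_{p}[x_{1},\dots,x_{d}]$ plus $0$. $M(n)=(nA)\cdot n+n\cdot u+v$ with $A$ symmetric. For a subspace $V$, $J^{M}_{V}$ is the ideal of $\mathbb{F}_{p}[x_{1},\dots,x_{d}]$ generated by $n\mapsto(nA)\cdot n$ and $n\mapsto(hA)\cdot n$, $h\in V$. $\Gamma^{s}(M)$ is the set of pairs $(h,J^{M}_{V}+f)$ with $V$ a subspace of $\mathbb{F}_{p}^{d}$, $h\in V$, $f\in\mathrm{HP}_{d}(s)$; $\Gamma^{s}_{1}(M)$ is the subset of elements of the form $(h,J^{M}_{\mathrm{span}\{h\}}+f)$. $(h,I+f)\sim(h',I'+f')$ iff $h=h'$ and $f-f'\in I+I'$. *)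

(* Defs.v *)
From HB Require Import structures.
From mathcomp Require Import all_boot all_order all_algebra.
From mathcomp Require Import mpoly.
Set Implicit Arguments. Unset Strict Implicit. Unset Printing Implicit Defensive.
Import GRing.Theory.
Local Open Scope ring_scope.

Section Defs.
Variables (p d : nat).

Notation F := 'F_p.
Notation vec := 'rV[F]_d.
Notation poly := {mpoly F[d]}.

(* A quadratic form M(n) = (nA).n + n.u + v with A symmetric. *)
Record qform := QForm {
  qA : 'M[F]_d;
  qu : vec;
  qv : F;
  qA_sym : qA^T = qA }.

Definition quad_poly (M : qform) : poly :=
  \sum_(i < d) \sum_(j < d) (qA M i j) *: ('X_i * 'X_j).

Definition lin_poly (M : qform) (h : vec) : poly :=
  \sum_(j < d) ((h *m qA M) 0 j) *: 'X_j.

Definition ideal_gen (S : poly -> Prop) (f : poly) : Prop :=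
  exists (k : nat) (g c : 'I_k -> poly),
    (forall i, S (g i)) /\ f = \sum_(i < k) c i * g i.

Definition JM_gens (M : qform) (V : {vspace vec}) (g : poly) : Prop :=
  g = quad_poly M \/ exists2 h, h \in V & g = lin_poly M h.

Definition JM (M : qform) (V : {vspace vec}) : poly -> Prop :=
  ideal_gen (JM_gens M V).

Definition ideal_add (I I' : poly -> Prop) (f : poly) : Prop :=
  exists a b, I a /\ I' b /\ f = a + b.

(* An element (h, J^M_V + f) of Gamma^s(M) is represented by the triple
   (h, V, f); the relation ~ below only depends on h, the ideal J^M_V and
   the coset J^M_V + f. *)
Definition gamma_elt := (vec * {vspace vec} * poly)%type.

Definition in_Gamma (s : nat) (x : gamma_elt) : Prop :=
  x.1.1 \in x.1.2 /\ x.2 \is s.-homog.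

Definition in_Gamma1 (s : nat) (x : gamma_elt) : Prop :=
  in_Gamma s x /\ x.1.2 = <[x.1.1]>%VS.

Definition gamma_sim (M : qform) (x y : gamma_elt) : Prop :=
  x.1.1 = y.1.1 /\ ideal_add (JM M x.1.2) (JM M y.1.2) (x.2 - y.2).

End Defs.

(* Main.v *)
Require Import Defs.
From HB Require Import structures.
From mathcomp Require Import all_boot all_order all_algebra.
From mathcomp Require Import mpoly.
Local Open Scope ring_scope.
Import GRing.Theory.
Set Implicit Arguments.

Section H.
Variables (p d : nat).
Notation poly := {mpoly 'F_p[d]}.

Lemma ig0 (S : poly -> Prop) : ideal_gen S 0.
Proof.
exists 0%N, (fun _ => 0), (fun _ => 0); split; first by case.
by rewrite big_ord0.
Qed.

Lemma igN (S : poly -> Prop) f : ideal_gen S f -> ideal_gen S (- f).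
Proof.
case=> k [g [c [Hg ->]]]; exists k, g, (fun i => - c i); split => //.
by rewrite -sumrN; apply: eq_bigr => i _; rewrite mulNr.
Qed.

Lemma igD (S : poly -> Prop) f f' :
  ideal_gen S f -> ideal_gen S f' -> ideal_gen S (f + f').
Proof.
case=> k [g [c [Hg ->]]]; case=> k' [g' [c' [Hg' ->]]].
exists (k + k')%N,
  (fun i => match split i with inl a => g a | inr b => g' b end),
  (fun i => match split i with inl a => c a | inr b => c' b end).
split.
  by move=> i; case: (split i).
rewrite big_split_ord /=; congr (_ + _); apply: eq_bigr => i _.
  by rewrite -/(unsplit (inl i)) unsplitK.
by rewrite -/(unsplit (inr i)) unsplitK.
Qed.

Lemma igB (S : poly -> Prop) f f' :
  ideal_gen S f -> ideal_gen S f' -> ideal_gen S (f - f').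
Proof. by move=> a b; apply: igD => //; apply: igN. Qed.

Lemma igS (S S' : poly -> Prop) f :
  (forall g, S g -> S' g) -> ideal_gen S f -> ideal_gen S' f.
Proof.
move=> HS [k [g [c [Hg ->]]]]; exists k, g, c; split => // i; exact: HS.
Qed.

Lemma JM_line (M : qform p d) (h : 'rV['F_p]_d) (V : {vspace 'rV['F_p]_d}) f :
  h \in V -> JM M <[h]>%VS f -> JM M V f.
Proof.
move=> hV; apply: igS => g [->|[h' h'in ->]]; [by left|right].
exists h' => //; have /subvP sub : (<[h]> <= V)%VS by rewrite -memvE.
exact: sub.
Qed.

Lemma addJ (I I' : poly -> Prop) f :
  ideal_add I I' f -> (forall a, I' a -> I a) ->
  (forall a b, I a -> I b -> I (a + b)) -> I f.
Proof. by move=> [a [b [Ha [Hb ->]]]] H1 H2; apply: H2 => //; apply: H1. Qed.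
End H.

Theorem lemma2p5 (p d s : nat) (hp : prime p) (M : qform p d) :
  (forall x1 x2 y : gamma_elt p d,
     in_Gamma s x1 -> in_Gamma s x2 -> in_Gamma1 s y ->
     gamma_sim M x1 y -> gamma_sim M x2 y -> gamma_sim M x1 x2) /\
  (forall y1 y2 y3 : gamma_elt p d,
     in_Gamma1 s y1 -> in_Gamma1 s y2 -> in_Gamma1 s y3 ->
     [/\ gamma_sim M y1 y1,
         (gamma_sim M y1 y2 -> gamma_sim M y2 y1) &
         (gamma_sim M y1 y2 -> gamma_sim M y2 y3 -> gamma_sim M y1 y3)]).
Proof.
have part1 : forall x1 x2 y : gamma_elt p d,
     in_Gamma s x1 -> in_Gamma s x2 -> in_Gamma1 s y ->
     gamma_sim M x1 y -> gamma_sim M x2 y -> gamma_sim M x1 x2.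
  move=> [[h1 V1] f1] [[h2 V2] f2] [[h V] f] [/= h1V1 _] [/= h2V2 _]
    [_ /= eV] [/= e1 A1] [/= e2 A2]; rewrite {}eV in A1 A2.
  subst h1 h2; split => //.
  have B1 : JM M V1 (f1 - f).
    apply: (addJ A1) => //; first by move=> a; apply: JM_line.
    by move=> a b; apply: igD.
  have B2 : JM M V2 (f2 - f).
    apply: (addJ A2) => //; first by move=> a; apply: JM_line.
    by move=> a b; apply: igD.
  exists (f1 - f), (- (f2 - f)); split => //; split; first exact: igN.
  by rewrite opprB addrA subrK.
have sym : forall y1 y2 : gamma_elt p d, gamma_sim M y1 y2 -> gamma_sim M y2 y1.
  move=> y1 y2 [e [a [b [Ha [Hb E]]]]]; split => //.
  exists (- b), (- a); split; first exact: igN.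
  split; first exact: igN.
  by rewrite -opprB E opprD addrC.
split => // y1 y2 y3 G1 G2 G3; split => //.
  split => //; exists 0, 0; split; first exact: ig0.
  by split; [exact: ig0 | rewrite subrr addr0].
  exact: sym.
move=> s12 s23; apply: (part1 y1 y3 y2) => //.
- by case: G1.
- by case: G3.
- exact: sym.
Qed.
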